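(* Let $\mathcal{S}$ be the ZCA-cor or the Cholesky whitening process, and let $\mathcal{D}$ be a Zolotarev ideal divergence. Then $\mathcal{D}_\mathcal{S}$ restricted to $\mathcal{P}_{\mathbf I}(\mathbb{R}^n)$ satisfies $$\mathcal{D}_\mathcal{S}(X+Z,Y+W)\le\mathcal{D}_\mathcal{S}(X,Y)+\mathcal{D}_\mathcal{S}(Z,W)$$ for all random vectors $X,Y,Z,W$ with identity covariance such that $X$ and $Z$ are independent and $Y$ and $W$ are independent.
   Context: $\mathcal{P}_{\mathbf I}(\mathbb{R}^n)$ is the set of probability measures on $\mathbb{R}^n$ with identity covariance; random vectors are identified with their laws. A linear whitening process maps $X$ (with invertible covariance $\Sigma$) to $W_XX$. Cholesky whitening: $W_X=L^T$, where $L$ is the unique lower triangular matrix with positive diagonal such that $LL^T=\Sigma^{-1}$. ZCA-cor whitening: $W_X=P^{-1/2}V^{-1/2}$, $P$ the correlation matrix of $X$, $V=\mathrm{diag}(\mathrm{Var}(X_1),\dots,\mathrm{Var}(X_n))$, with the square root chosen so that $W_X=\mathbf I$ whenever $X$ has identity covariance (in particular the square root of $\mathbf I$ is $\mathbf I$). $\mathcal{D}_\mathcal{S}(X,Y)=\mathcal{D}(\mathcal{S}(X),\mathcal{S}(Y))$. A divergence $\mathcal{D}$ is Zolotarev ideal if (i) $\mathcal{D}(X+Z,Y+W)\le\mathcal{D}(X,Y)+\mathcal{D}(Z,W)$ whenever $Z$ is independent of $X$ and $W$ is independent of $Y$, and (ii) $\mathcal{D}(cX,cY)=|c|\mathcal{D}(X,Y)$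 for all $X,Y$ and $c\in\mathbb{R}$. *)

(* Defs.v *)
From HB Require Import structures.
From mathcomp Require Import all_boot all_order all_algebra.
From mathcomp Require Import all_classical all_reals all_analysis.
Set Implicit Arguments. Unset Strict Implicit. Unset Printing Implicit Defensive.
Import Order.TTheory GRing.Theory Num.Theory.
Import numFieldNormedType.Exports.
Local Open Scope classical_set_scope.
Local Open Scope ring_scope.

(* R^n, represented by row vectors 'rV[R]_n, with its Borel sigma-algebra
   (generated by the open sets of the product topology). *)
Definition Rn (R : realType) (n : nat) :=
  g_sigma_algebraType (@open 'rV[R]_n).

Definition law d (Omega : measurableType d) (R : realType) (n : nat)
  (P : probability Omega R) (X : Omega -> Rn R n) : set (Rn R n) -> \bar R :=
  pushforward P X.

Definition vadd (R : realType) (n : nat) (x y : Rn R n) : Rn R n :=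
  (x : 'rV[R]_n) + (y : 'rV[R]_n).
Definition vscale (R : realType) (n : nat) (c : R) (x : Rn R n) : Rn R n :=
  c *: (x : 'rV[R]_n).

Definition indep d (Omega : measurableType d) (R : realType) (n : nat)
  (P : probability Omega R) (X Z : Omega -> Rn R n) : Prop :=
  forall A B : set (Rn R n), measurable A -> measurable B ->
    P (X @^-1` A `&` Z @^-1` B) = (P (X @^-1` A) * P (Z @^-1` B))%E.

Definition Rexp (R : realType) (n : nat) (mu : set (Rn R n) -> \bar R)
  (f : Rn R n -> R) : R := fine (\int[mu]_x (f x)%:E)%E.

Definition coord (R : realType) (n : nat) (i : 'I_n) (x : Rn R n) : R :=
  (x : 'rV[R]_n) ord0 i.

Definition covmx (R : realType) (n : nat) (mu : set (Rn R n) -> \bar R)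
  : 'M[R]_n :=
  \matrix_(i, j) (Rexp mu (fun x => coord i x * coord j x)
                  - Rexp mu (coord i) * Rexp mu (coord j)).

Definition identity_cov (R : realType) (n : nat)
  (mu : set (Rn R n) -> \bar R) : Prop :=
  (forall i : 'I_n, mu.-integrable setT (fun x => ((coord i x) ^+ 2)%:E))
  /\ covmx mu = 1%:M.

(* linear map x |-> A x (x viewed as a column vector) *)
Definition linmap (R : realType) (n : nat) (A : 'M[R]_n) (x : Rn R n)
  : Rn R n := (x : 'rV[R]_n) *m A^T.

(* the whitened law S(mu) = law of W_X X, where the whitening matrix
   W_X = S (Cov X) is a function of the covariance matrix *)
Definition whiten (R : realType) (n : nat) (S : 'M[R]_n -> 'M[R]_n)
  (mu : set (Rn R n) -> \bar R) : set (Rn R n) -> \bar R :=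
  pushforward mu (linmap (S (covmx mu))).

Definition DS (R : realType) (n : nat) (S : 'M[R]_n -> 'M[R]_n)
  (D : (set (Rn R n) -> \bar R) -> (set (Rn R n) -> \bar R) -> \bar R)
  (mu nu : set (Rn R n) -> \bar R) : \bar R :=
  D (whiten S mu) (whiten S nu).

Definition lower_triangular (R : realType) (n : nat) (L : 'M[R]_n) : Prop :=
  forall i j : 'I_n, (i < j)%N -> L i j = 0.

Definition is_chol_factor (R : realType) (n : nat) (Sigma L : 'M[R]_n)
  : Prop :=
  lower_triangular L /\ (forall i, 0 < L i i) /\ L *m L^T = invmx Sigma.

(* W_X = L^T, L the (unique) Cholesky-type factor of Sigma^{-1} *)
Definition cholesky_W (R : realType) (n : nat) (Sigma : 'M[R]_n) : 'M[R]_n :=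
  (xget 0 [set L | is_chol_factor Sigma L])^T.

Definition psd (R : realType) (n : nat) (A : 'M[R]_n) : Prop :=
  forall v : 'rV[R]_n, 0 <= (v *m A *m v^T) ord0 ord0.

(* principal square root: the unique symmetric positive semidefinite
   square root (so that the square root of 1 is 1) *)
Definition psd_sqrt (R : realType) (n : nat) (A : 'M[R]_n) : 'M[R]_n :=
  xget 0 [set B | B^T = B /\ psd B /\ B *m B = A].

Definition var_invsqrt (R : realType) (n : nat) (Sigma : 'M[R]_n) : 'M[R]_n :=
  diag_mx (\row_i (Num.sqrt (Sigma i i))^-1).

Definition corrmx (R : realType) (n : nat) (Sigma : 'M[R]_n) : 'M[R]_n :=
  var_invsqrt Sigma *m Sigma *m var_invsqrt Sigma.

Definition zcacor_W (R : realType) (n : nat) (Sigma : 'M[R]_n) : 'M[R]_n :=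
  invmx (psd_sqrt (corrmx Sigma)) *m var_invsqrt Sigma.

Definition divergence (R : realType) (n : nat)
  (D : (set (Rn R n) -> \bar R) -> (set (Rn R n) -> \bar R) -> \bar R)
  : Prop :=
  (forall mu nu : probability (Rn R n) R, (0 <= D mu nu)%E) /\
  (forall mu : probability (Rn R n) R, D mu mu = 0%E).

Definition zolotarev_ideal (R : realType) (n : nat)
  (D : (set (Rn R n) -> \bar R) -> (set (Rn R n) -> \bar R) -> \bar R)
  : Prop :=
  (forall (d1 : measure_display) (O1 : measurableType d1)
          (P1 : probability O1 R) (X Z : O1 -> Rn R n)
          (d2 : measure_display) (O2 : measurableType d2)
          (P2 : probability O2 R) (Y W : O2 -> Rn R n),
      measurable_fun setT X -> measurable_fun setT Z ->
      measurable_fun setT Y -> measurable_fun setT W ->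
      indep P1 X Z -> indep P2 Y W ->
      (D (law P1 (fun w => vadd (X w) (Z w)))
         (law P2 (fun w => vadd (Y w) (W w)))
       <= D (law P1 X) (law P2 Y) + D (law P1 Z) (law P2 W))%E) /\
  (forall (mu nu : probability (Rn R n) R) (c : R),
      D (pushforward mu (vscale c))
        (pushforward nu (vscale c))
      = (`|c|%:E * D mu nu)%E).

(* Main.v *)
Require Import Defs.
From HB Require Import structures.
From mathcomp Require Import all_boot all_order all_algebra.
From mathcomp Require Import all_classical all_reals all_analysis.
From mathcomp Require Import measurable_realfun.
From mathcomp Require Import ring lra.
Import Order.TTheory GRing.Theory Num.Theory.
Import numFieldNormedType.Exports.
Local Open Scope classical_set_scope.
Local Open Scope ring_scope.
Section Mat.
Variables (R : realType) (n : nat).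

Lemma mxvvT_ge0 (w : 'rV[R]_n) : 0 <= (w *m w^T) ord0 ord0.
Proof.
rewrite mxE; apply: sumr_ge0 => j _; rewrite mxE -expr2; exact: sqr_ge0.
Qed.

Lemma mxvvT_eq0 (w : 'rV[R]_n) : (w *m w^T) ord0 ord0 = 0 -> w = 0.
Proof.
rewrite mxE => h; apply/rowP => j; rewrite mxE.
have h0 : forall k : 'I_n, true -> 0 <= w ord0 k * w^T k ord0.
  by move=> k _; rewrite mxE -expr2; exact: sqr_ge0.
have := @psumr_eq0P _ _ _ _ h0 h j isT; rewrite mxE.
by move/eqP; rewrite mulf_eq0 orbb => /eqP.
Qed.

Lemma psd_sqrt_uniq1 (B : 'M[R]_n) : psd B -> B *m B = 1%:M -> B = 1%:M.
Proof.
move=> pB BB.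
have key : forall v : 'rV[R]_n, v *m B = v.
  move=> v; set w := v *m (B - 1%:M).
  have w0 : w *m (B + 1%:M) = 0.
    rewrite /w -mulmxA mulmxBl mulmxDr mulmxDr BB !mulmx1 mul1mx.
    by rewrite mulmxN (addrC 1%:M) subrr.
  have : (w *m B *m w^T) ord0 ord0 + (w *m w^T) ord0 ord0 = 0.
    have e1 : (w *m B *m w^T) ord0 ord0 + (w *m w^T) ord0 ord0 =
              (w *m B *m w^T + w *m w^T) ord0 ord0 by rewrite [RHS]mxE.
    rewrite e1.
    rewrite -mulmxDl.
    have -> : w *m B + w = w *m (B + 1%:M) by rewrite mulmxDr mulmx1.
    by rewrite w0 mul0mx mxE.
  move=> /eqP; rewrite paddr_eq0 ?pB ?mxvvT_ge0// => /andP[_ /eqP /mxvvT_eq0].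
  by rewrite /w mulmxBr mulmx1 => /eqP; rewrite subr_eq0 => /eqP.
apply/row_matrixP => i.
by rewrite !rowE key mulmx1.
Qed.

Lemma psd1 : psd (1%:M : 'M[R]_n).
Proof. by move=> v; rewrite mulmx1; exact: mxvvT_ge0. Qed.

Lemma psd_sqrt1 : psd_sqrt (1%:M : 'M[R]_n) = 1%:M.
Proof.
rewrite /psd_sqrt.
have ex : exists B : 'M[R]_n, [set B | B^T = B /\ psd B /\ B *m B = 1%:M] B.
  by exists 1%:M; split; [exact: trmx1 | split; [exact: psd1 | exact: mulmx1]].
have [_ [pB BB]] := xgetPex 0 ex.
exact: psd_sqrt_uniq1.
Qed.

End Mat.
Section Mat2.
Variables (R : realType) (n : nat).

Lemma chol_uniq {s : R} {L : 'M[R]_n} : 0 < s ->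
  lower_triangular L -> (forall i, 0 < L i i) -> L *m L^T = s%:M ->
  L = (Num.sqrt s)%:M.
Proof.
move=> s0 lL pL LL.
have H : forall m (k : 'I_n), (k < m)%N -> forall i, i != k -> L i k = 0.
  elim=> [//|m IH] k km i ik.
  have rowk : forall j, j != k -> L k j = 0.
    move=> j jk; have [jk'|kj] := ltnP j k.
      by apply: IH => //; [exact: leq_trans jk' _ | rewrite eq_sym].
    by apply: lL; rewrite ltn_neqAle kj andbT eq_sym.
  have : (L *m L^T) i k = L i k * L k k.
    rewrite mxE (bigD1 k)//= big1 ?addr0; first by rewrite mxE.
    by move=> j jk; rewrite mxE rowk ?mulr0.
  rewrite LL mxE (negbTE ik) mulr0n => /esym /eqP.
  by rewrite mulf_eq0 (gt_eqF (pL k)) orbF => /eqP.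
have diagL : forall i j, i != j -> L i j = 0 by move=> i j; exact: H n j (ltn_ord j) i.
apply/matrixP => i j; rewrite mxE.
have [<-|ij] := eqVneq i j; last by rewrite diagL.
rewrite mulr1n.
have : (L *m L^T) i i = L i i ^+ 2.
  rewrite mxE (bigD1 i)//= big1 ?addr0; first by rewrite mxE expr2.
  by move=> k ki; rewrite mxE diagL ?mul0r // eq_sym.
rewrite LL mxE eqxx mulr1n => ->.
by rewrite sqrtr_sqr gtr0_norm.
Qed.

Lemma cholesky_W_scalar (a : R) : 0 < a ->
  cholesky_W (a%:M : 'M[R]_n) = (Num.sqrt (a^-1))%:M.
Proof.
move=> a0; rewrite /cholesky_W.
have ia0 : 0 < a^-1 by rewrite invr_gt0.
have ex : exists L : 'M[R]_n, [set L | is_chol_factor (a%:M) L] L.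
  exists (Num.sqrt (a^-1))%:M; split.
    by move=> i j ij; rewrite mxE; case: eqP => [e|]; [rewrite e ltnn in ij|rewrite mulr0n].
  split; first by move=> i; rewrite mxE eqxx mulr1n sqrtr_gt0.
  rewrite invmx_scalar tr_scalar_mx -scalar_mxM -expr2 sqr_sqrtr//.
  exact: ltW.
have [lL [pL LL]] := xgetPex 0 ex.
by rewrite (chol_uniq ia0 lL pL) ?tr_scalar_mx// LL invmx_scalar.
Qed.

Lemma zcacor_W_scalar (a : R) : 0 < a ->
  zcacor_W (a%:M : 'M[R]_n) = ((Num.sqrt a)^-1)%:M.
Proof.
move=> a0; rewrite /zcacor_W /corrmx.
have -> : var_invsqrt (a%:M : 'M[R]_n) = ((Num.sqrt a)^-1)%:M.
  rewrite /var_invsqrt; apply/matrixP => i j; rewrite !mxE.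
  by rewrite eqxx mulr1n.
rewrite -!scalar_mxM.
have -> : (Num.sqrt a)^-1 * a * (Num.sqrt a)^-1 = 1.
  by rewrite mulrAC -expr2 exprVn sqr_sqrtr ?(ltW a0)// mulVf// gt_eqF.
by rewrite psd_sqrt1 invmx1 mul1mx.
Qed.

End Mat2.
Section Meas.
Variables (R : realType) (n : nat).

Lemma Rn_open_measurable (U : set (Rn R n)) : @open 'rV[R]_n U -> measurable U.
Proof. by move=> oU; apply: sub_sigma_algebra. Qed.

Lemma coord_mfun (i : 'I_n) : measurable_fun setT (@Defs.coord R n i).
Proof.
apply: (@measurability _ _ _ R setT (@Defs.coord R n i) (@RGenOpens.G R) (RGenOpens.measurableE R)).
move=> _ [_ [a [b ->]] <-]; rewrite setTI; apply: Rn_open_measurable.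
rewrite openE => x /=; rewrite /preimage /= in_itv /= => /andP[ax xb].
apply/nbhs_ballP; exists (Num.min (Defs.coord i x - a) (b - Defs.coord i x)).
  by rewrite /= lt_min !subr_gt0 ax xb.
move=> y /= [_ /(_ ord0 i)]; rewrite -ball_normE /= lt_min => /andP[h1 h2].
move: h1 h2; rewrite !ltr_distlC /Defs.coord => /andP[h1 _] /andP[_ h2].
by rewrite in_itv /=; apply/andP; split; lra.
Qed.

End Meas.
Arguments coord_mfun {R n}.
Section Meas2.
Variables (R : realType) (n : nat).

Definition qv (q : {ffun 'I_n -> rat}) : 'rV[R]_n := \row_j ratr (q j).

Lemma Rn_mfun d (O : measurableType d) (f : O -> Rn R n) :
  (forall i, measurable_fun setT (fun w => Defs.coord i (f w))) ->
  measurable_fun setT f.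
Proof.
move=> mf.
have mE : @measurable _ (Rn R n) = <<s @open 'rV[R]_n >> by [].
apply: (@measurability _ _ O (Rn R n) setT f _ mE).
move=> _ [U oU <-]; rewrite setTI.
pose F (p : {ffun 'I_n -> rat} * rat) : set O :=
  if pselect (@ball _ 'rV[R]_n (qv p.1) (ratr p.2) `<=` U)
  then f @^-1` (@ball _ 'rV[R]_n (qv p.1) (ratr p.2)) else set0.
have -> : f @^-1` U = \bigcup_p F p.
  apply/seteqP; split; last first.
    move=> w [p _]; rewrite /F; case: pselect => // sub; exact: sub.
  move=> w /= Ufw.
  move: oU; rewrite openE => /(_ _ Ufw) hU.
  have hU' : nbhs (f w : 'rV[R]_n) U := hU.
  have [e /= e0 be] := (proj1 (nbhs_ballP _ _)) hU'.
  have [r /andP[r0 re]] : exists r : rat, (0 < ratr r :> R) && (ratr r < e / 2 :> R).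
    have := @rat_in_itvoo R 0 (e / 2); rewrite divr_gt0// => /(_ isT) [r].
    by rewrite in_itv /= => h; exists r.
  have /choice [g hg] : forall j : 'I_n, exists q : rat,
      ratr q \in `](f w : 'rV[R]_n) ord0 j - ratr r, (f w : 'rV[R]_n) ord0 j + ratr r[.
    move=> j; apply: rat_in_itvoo; lra.
  have bq : @ball _ 'rV[R]_n (f w) (ratr r) (qv [ffun j => g j]).
    split => // i j; rewrite -ball_normE /= ltr_distlC /qv !mxE ffunE.
    by rewrite (ord1 i); move: (hg j); rewrite in_itv.
  exists ([ffun j => g j], r) => //; rewrite /F /=; case: pselect => /= [_|].
    exact: ball_sym.
  move=> nsub; exfalso; apply: nsub => y hy.
  apply: be; apply: (@le_ball _ _ _ (ratr r + ratr r)); first lra.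
  exact: ball_triangle bq hy.
apply: countable_bigcupT_measurable => // p; rewrite /F.
destruct (pselect _) as [s|s]; last exact: measurable0.
set c := qv p.1; set r : R := ratr p.2.
have [r0|r0] := boolP (0 < r); last first.
  have -> : f @^-1` (@ball _ 'rV[R]_n c r) = set0.
    by apply/seteqP; split => // w [/= h _]; rewrite h in r0.
  exact: measurable0.
have -> : f @^-1` (@ball _ 'rV[R]_n c r) =
    ~` \bigcup_(j : 'I_n) ~` ((fun w => Defs.coord j (f w)) @^-1` ball (c ord0 j) r).
  apply/seteqP; split.
    move=> w [_ h] [j _]; apply; exact: h.
  move=> w /= h; split => // i j; rewrite (ord1 i).
  apply: contrapT => nb; apply: h; exists j => //.
apply: measurableC; apply: countable_bigcupT_measurable => // j.
apply: measurableC; rewrite -[X in measurable X]setTI.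
by apply: mf => //; rewrite ball_itv; exact: measurable_itv.
Qed.

End Meas2.
Arguments Rn_mfun {R n d O f}.
Section MkMfun.
Context d1 d2 (T1 : measurableType d1) (T2 : measurableType d2).
Definition mkmfun (f : T1 -> T2) (mf : measurable_fun setT f) : {mfun T1 >-> T2} :=
  HB.pack f (isMeasurableFun.Build _ _ _ _ _ mf).
End MkMfun.

Section Indep.
Local Open Scope ereal_scope.
Context (R : realType) d (O : measurableType d) (P : probability O R).

Lemma int_measure_eq d' (T : measurableType d') (m1 m2 : {measure set T -> \bar R})
  (f : T -> \bar R) : (forall A, measurable A -> m1 A = m2 A) ->
  m1.-integrable setT f -> m2.-integrable setT f.
Proof.
move=> e /integrableP[mf fi]; apply/integrableP; split => //.
by rewrite -(@eq_measure_integral _ _ _ setT m2 m1) // => A mA _; rewrite e.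
Qed.

Lemma EM_indep (U V : O -> R) (mU : measurable_fun setT U) (mV : measurable_fun setT V) :
  (forall A B, measurable A -> measurable B ->
     P (U @^-1` A `&` V @^-1` B) = P (U @^-1` A) * P (V @^-1` B)) ->
  P.-integrable setT (EFin \o U) -> P.-integrable setT (EFin \o V) ->
  P.-integrable setT (EFin \o (fun w => U w * V w)%R) ->
  \int[P]_w (U w * V w)%R%:E = \int[P]_w (U w)%:E * \int[P]_w (V w)%:E.
Proof.
move=> iUV iU iV iM.
have mUV : measurable_fun setT (fun w => (U w, V w)) by exact: measurable_fun_pair.
pose mu := distribution P (@mkmfun _ _ _ _ U mU).
pose nu := distribution P (@mkmfun _ _ _ _ V mV).
pose J := distribution P (@mkmfun _ _ _ _ _ mUV).
have eJ : forall X, measurable X -> (mu \x nu) X = J X.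
  apply: product_measure_unique => A B mA mB.
  exact: iUV.
pose f := fun p : R * R => (p.1 * p.2)%R%:E.
have mf : measurable_fun setT f.
  apply/measurable_EFinP; apply: measurable_funM; [exact: measurable_fst|exact: measurable_snd].
have iJ : J.-integrable setT f.
  exact: (@integrable_pushforward _ _ _ _ _ _ mUV P setT f mf iM).
have iMN : (mu \x nu).-integrable setT f.
  apply: (@int_measure_eq _ _ J (mu \x nu) f) => //.
  by move=> A mA; apply/esym/eJ.
have imu : mu.-integrable setT (EFin \o id).
  exact: (@integrable_pushforward _ _ _ _ _ _ mU P setT EFin (@EFin_measurable R setT) iU).
have inu : nu.-integrable setT (EFin \o id).
  exact: (@integrable_pushforward _ _ _ _ _ _ mV P setT EFin (@EFin_measurable R setT) iV).
have -> : \int[P]_w (U w * V w)%R%:E = \int[J]_p f p.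
  by rewrite (@integral_pushforward _ _ _ _ _ _ mUV P setT f mf iM).
have -> : \int[P]_w (U w)%:E = \int[mu]_x x%:E.
  by rewrite (@integral_pushforward _ _ _ _ _ _ mU P setT EFin (@EFin_measurable R setT) iU).
have -> : \int[P]_w (V w)%:E = \int[nu]_x x%:E.
  by rewrite (@integral_pushforward _ _ _ _ _ _ mV P setT EFin (@EFin_measurable R setT) iV).
rewrite (@eq_measure_integral _ _ _ setT (mu \x nu) J); last by move=> A mA _; apply/esym/eJ.
rewrite -(integral12_prod_meas1 iMN) /fubini_F /f /=.
have finnu : \int[nu]_x x%:E \is a fin_num by apply: integrable_fin_num.
transitivity (\int[mu]_x (x * fine (\int[nu]_y y%:E))%R%:E).
  apply: eq_integral => x _.
  under eq_integral do rewrite EFinM.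
  rewrite integralZl //=; first by rewrite EFinM fineK.

under eq_integral do rewrite EFinM.
by rewrite integralZr // fineK.
Qed.

End Indep.
Arguments EM_indep {R d O P U V}.
Section Cov.
Context (R : realType) d (O : measurableType d) (P : probability O R).

Lemma absle_sq1 (x : R) : `|x| <= x ^+ 2 + 1.
Proof.
have h := normr_ge0 x; rewrite -(real_normK (num_real x)); nra.
Qed.

Lemma absM_le_sq (x y : R) : `|x * y| <= x ^+ 2 + y ^+ 2.
Proof.
have hx := normr_ge0 x; have hy := normr_ge0 y.
rewrite normrM -(real_normK (num_real x)) -(real_normK (num_real y)); nra.
Qed.

Lemma intD (f g : O -> R) : P.-integrable setT (EFin \o f) ->
  P.-integrable setT (EFin \o g) ->
  P.-integrable setT (EFin \o (fun w => f w + g w)).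
Proof.
move=> hf hg; apply: (@eq_integrable _ _ _ P setT measurableT ((EFin \o f) \+ (EFin \o g))%E) => //.
exact: integrableD.
Qed.

Lemma int_lin (f : O -> R) : measurable_fun setT f ->
  P.-integrable setT (EFin \o (fun w => f w ^+ 2)) ->
  P.-integrable setT (EFin \o f).
Proof.
move=> mf h2.
apply: (@le_integrable _ _ _ P setT measurableT _ (EFin \o (fun w => f w ^+ 2 + 1))) => //.
- exact/measurable_EFinP.
- move=> x _; rewrite /comp !abse_EFin lee_fin (ger0_norm (_ : 0 <= _ + 1)).
    exact: absle_sq1.
  by rewrite addr_ge0 ?sqr_ge0.
- apply: intD => //; exact: finite_measure_integrable_cst.
Qed.

Lemma int_prod (f g : O -> R) : measurable_fun setT f -> measurable_fun setT g ->
  P.-integrable setT (EFin \o (fun w => f w ^+ 2)) ->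
  P.-integrable setT (EFin \o (fun w => g w ^+ 2)) ->
  P.-integrable setT (EFin \o (fun w => f w * g w)).
Proof.
move=> mf mg hf hg.
apply: (@le_integrable _ _ _ P setT measurableT _ (EFin \o (fun w => f w ^+ 2 + g w ^+ 2))) => //.
- by apply/measurable_EFinP; exact: measurable_funM.
- move=> x _; rewrite /comp !abse_EFin lee_fin (ger0_norm (_ : 0 <= _ + _)).
    exact: absM_le_sq.
  by rewrite addr_ge0 ?sqr_ge0.
- exact: intD.
Qed.

End Cov.
Arguments intD {R d O P f g}.
Arguments int_lin {R d O P f}.
Arguments int_prod {R d O P f g}.
Section Cov2.
Context (R : realType) (n : nat) d (O : measurableType d) (P : probability O R).

Lemma vadd_mfun (X Z : O -> Rn R n) : measurable_fun setT X ->
  measurable_fun setT Z -> measurable_fun setT (fun w => vadd (X w) (Z w)).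
Proof.
move=> mX mZ; apply: Rn_mfun => i.
have -> : (fun w => Defs.coord i (vadd (X w) (Z w))) =
          (fun w => Defs.coord i (X w) + Defs.coord i (Z w)).
  by apply/funext => w; rewrite /Defs.coord /vadd mxE.
apply: measurable_funD.
  exact: (measurableT_comp (coord_mfun i) mX).
exact: (measurableT_comp (coord_mfun i) mZ).
Qed.

Lemma law_integrable (X : O -> Rn R n) (mX : measurable_fun setT X)
  (g : Rn R n -> R) (mg : measurable_fun setT g) :
  (law P X).-integrable setT (EFin \o g) ->
  P.-integrable setT (EFin \o (fun w => g (X w))).
Proof.
move=> /integrableP [_ fin]; apply/integrableP; split.
  apply/measurable_EFinP; exact: (measurableT_comp mg mX).
move: fin; rewrite /law (@ge0_integral_pushforward _ _ _ _ _ X mX P setT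
  (abse \o (EFin \o g))) //.
apply: measurableT_comp => //; exact/measurable_EFinP.
by move=> y _; exact: abse_ge0.
Qed.

Lemma Rexp_law (X : O -> Rn R n) (mX : measurable_fun setT X)
  (g : Rn R n -> R) (mg : measurable_fun setT g) :
  P.-integrable setT (EFin \o (fun w => g (X w))) ->
  Rexp (law P X) g = Rintegral P setT (fun w => g (X w)).
Proof.
move=> ig; rewrite /Rexp /law /Rintegral.
rewrite (@integral_pushforward _ _ _ _ _ X mX P setT (EFin \o g)) //.
exact/measurable_EFinP.
Qed.

Lemma Rindep (U V : O -> R) (mU : measurable_fun setT U) (mV : measurable_fun setT V) :
  (forall A B, measurable A -> measurable B ->
     P (U @^-1` A `&` V @^-1` B) = (P (U @^-1` A) * P (V @^-1` B))%E) ->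
  P.-integrable setT (EFin \o U) -> P.-integrable setT (EFin \o V) ->
  P.-integrable setT (EFin \o (fun w => U w * V w)) ->
  Rintegral P setT (fun w => U w * V w) =
  Rintegral P setT U * Rintegral P setT V.
Proof.
move=> iUV iU iV iM; rewrite /Rintegral (EM_indep mU mV iUV iU iV iM).
by rewrite fineM //; apply: integrable_fin_num.
Qed.

Section WithX.
Variables (X : O -> Rn R n) (mX : measurable_fun setT X)
  (cX : identity_cov (law P X)).

Lemma cX_meas i : measurable_fun setT (fun w => Defs.coord i (X w)).
Proof. exact: (measurableT_comp (coord_mfun i) mX). Qed.

Lemma cX_sq i : P.-integrable setT (EFin \o (fun w => Defs.coord i (X w) ^+ 2)).
Proof.
apply: (@law_integrable X mX (fun x => Defs.coord i x ^+ 2)).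
  by apply: measurable_funX; exact: coord_mfun.
exact: cX.1 i.
Qed.

Lemma cX_lin i : P.-integrable setT (EFin \o (fun w => Defs.coord i (X w))).
Proof. apply: int_lin; [exact: cX_meas | exact: cX_sq]. Qed.

Lemma cX_entry i j :
  Rintegral P setT (fun w => Defs.coord i (X w) * Defs.coord j (X w))
  - Rintegral P setT (fun w => Defs.coord i (X w))
    * Rintegral P setT (fun w => Defs.coord j (X w)) = (i == j)%:R.
Proof.
have := congr1 (fun M : 'M[R]_n => M i j) cX.2; rewrite /= !mxE => <-.
rewrite (@Rexp_law X mX (fun x => Defs.coord i x * Defs.coord j x)).
- rewrite (@Rexp_law X mX (Defs.coord i)) ?(@Rexp_law X mX (Defs.coord j)) //.
  + exact: coord_mfun.
  + exact: cX_lin.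
  + exact: coord_mfun.
  + exact: cX_lin.
- by apply: measurable_funM; exact: coord_mfun.
- apply: int_prod; [exact: cX_meas|exact: cX_meas|exact: cX_sq|exact: cX_sq].
Qed.

End WithX.

Lemma indep_coord (X Z : O -> Rn R n) (iXZ : indep P X Z) i j A B :
  measurable A -> measurable B ->
  P ((fun w => Defs.coord i (X w)) @^-1` A `&` (fun w => Defs.coord j (Z w)) @^-1` B)
  = (P ((fun w => Defs.coord i (X w)) @^-1` A) *
     P ((fun w => Defs.coord j (Z w)) @^-1` B))%E.
Proof.
move=> mA mB.
have mA' : measurable (Defs.coord i @^-1` A).
  by rewrite -[X in measurable X]setTI; exact: coord_mfun.
have mB' : measurable (Defs.coord j @^-1` B).
  by rewrite -[X in measurable X]setTI; exact: coord_mfun.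
exact: (iXZ _ _ mA' mB').
Qed.

Lemma cov_sum (X Z : O -> Rn R n) (mX : measurable_fun setT X)
  (mZ : measurable_fun setT Z) (cX : identity_cov (law P X))
  (cZ : identity_cov (law P Z)) (iXZ : indep P X Z) :
  covmx (law P (fun w => vadd (X w) (Z w))) = 2%:M.
Proof.
have mS := vadd_mfun _ _ mX mZ.
set S := fun w => vadd (X w) (Z w) in mS *.
apply/matrixP => i j; rewrite !mxE.
set ai := fun w => Defs.coord i (X w).
set aj := fun w => Defs.coord j (X w).
set bi := fun w => Defs.coord i (Z w).
set bj := fun w => Defs.coord j (Z w).
have eS : forall k w, Defs.coord k (S w) = Defs.coord k (X w) + Defs.coord k (Z w).
  by move=> k w; rewrite /Defs.coord /S /vadd mxE.
have mai : measurable_fun setT ai by exact: cX_meas.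
have maj : measurable_fun setT aj by exact: cX_meas.
have mbi : measurable_fun setT bi by exact: cX_meas.
have mbj : measurable_fun setT bj by exact: cX_meas.
have iai := cX_lin _ mX cX i. have iaj := cX_lin _ mX cX j.
have ibi := cX_lin _ mZ cZ i. have ibj := cX_lin _ mZ cZ j.
have sai := cX_sq _ mX cX i. have saj := cX_sq _ mX cX j.
have sbi := cX_sq _ mZ cZ i. have sbj := cX_sq _ mZ cZ j.
have iaa : P.-integrable setT (EFin \o (fun w => ai w * aj w)) by exact: int_prod.
have iab : P.-integrable setT (EFin \o (fun w => ai w * bj w)) by exact: int_prod.
have iba : P.-integrable setT (EFin \o (fun w => bi w * aj w)) by exact: int_prod.
have ibb : P.-integrable setT (EFin \o (fun w => bi w * bj w)) by exact: int_prod.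
have f2 : (fun w => Defs.coord i (S w) * Defs.coord j (S w)) =
   (fun w => (ai w * aj w + ai w * bj w) + (bi w * aj w + bi w * bj w)).
  by apply/funext => w; rewrite !eS /ai /aj /bi /bj; ring.
have f1 : forall k, (fun w => Defs.coord k (S w)) =
   (fun w => Defs.coord k (X w) + Defs.coord k (Z w)).
  by move=> k; apply/funext => w; rewrite eS.
rewrite (@Rexp_law S mS (fun x => Defs.coord i x * Defs.coord j x)); last 2 first.
- by apply: measurable_funM; exact: coord_mfun.
- by rewrite f2; apply: intD; apply: intD.
rewrite (@Rexp_law S mS (Defs.coord i)); last 2 first.
- exact: coord_mfun.
- by rewrite f1; apply: intD.
rewrite (@Rexp_law S mS (Defs.coord j)); last 2 first.
- exact: coord_mfun.
- by rewrite f1; apply: intD.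
rewrite f2 !f1.
rewrite RintegralD //; try by apply: intD.
rewrite RintegralD // RintegralD //.
rewrite RintegralD // RintegralD //.
have hX := cX_entry _ mX cX i j.
have hZ := cX_entry _ mZ cZ i j.
have hab : Rintegral P setT (fun w => ai w * bj w) =
    Rintegral P setT ai * Rintegral P setT bj.
  apply: Rindep => //; exact: indep_coord.
have hba : Rintegral P setT (fun w => bi w * aj w) =
    Rintegral P setT bi * Rintegral P setT aj.
  apply: Rindep => // A B mA mB.
  rewrite setIC muleC; exact: indep_coord.
rewrite -/ai -/aj -/bi -/bj in hX hZ *.
rewrite hab hba.
have -> : (2 : R) *+ (i == j) = (i == j)%:R + (i == j)%:R.
  by rewrite -mulrnDl.
lra.
- exact: (intD iaa iab).
- exact: (intD iba ibb).
Qed.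

End Cov2.
Lemma S_props (R : realType) (n : nat) (S : 'M[R]_n -> 'M[R]_n) :
  S = @zcacor_W R n \/ S = @cholesky_W R n ->
  S 1%:M = 1%:M /\ exists c : R, 0 <= c <= 1 /\ S 2%:M = c%:M.
Proof.
have two0 : (0 : R) < 2 by lra.
case=> ->; split.
- by rewrite zcacor_W_scalar ?ltr01 // sqrtr1 invr1.
- exists (Num.sqrt 2)^-1; rewrite zcacor_W_scalar //; split => //.
  have s0 : 0 < Num.sqrt (2 : R) by rewrite sqrtr_gt0.
  rewrite invr_ge0 (ltW s0) /= invf_le1 // -[X in X <= _]sqrtr1 ler_sqrt //; lra.
- by rewrite cholesky_W_scalar ?ltr01 // invr1 sqrtr1.
- exists (Num.sqrt 2^-1); rewrite cholesky_W_scalar //; split => //.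
  rewrite sqrtr_ge0 /= -[X in _ <= X]sqrtr1 ler_sqrt // invf_le1 //; lra.
Qed.

Theorem mainTheorem11 (R : realType) (n : nat)
  (S : 'M[R]_n -> 'M[R]_n)
  (hS : S = @zcacor_W R n \/ S = @cholesky_W R n)
  (D : (set (Rn R n) -> \bar R) -> (set (Rn R n) -> \bar R) -> \bar R)
  (hDdiv : divergence D) (hDideal : zolotarev_ideal D)
  (d1 : measure_display) (O1 : measurableType d1) (P1 : probability O1 R)
  (X Z : O1 -> Rn R n)
  (d2 : measure_display) (O2 : measurableType d2) (P2 : probability O2 R)
  (Y W : O2 -> Rn R n)
  (mX : measurable_fun setT X) (mZ : measurable_fun setT Z)
  (mY : measurable_fun setT Y) (mW : measurable_fun setT W)
  (cX : identity_cov (law P1 X)) (cZ : identity_cov (law P1 Z))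
  (cY : identity_cov (law P2 Y)) (cW : identity_cov (law P2 W))
  (iXZ : indep P1 X Z) (iYW : indep P2 Y W) :
  (DS S D (law P1 (fun w => vadd (X w) (Z w)))
          (law P2 (fun w => vadd (Y w) (W w)))
   <= DS S D (law P1 X) (law P2 Y) + DS S D (law P1 Z) (law P2 W))%E.
Proof.
have [S1 [c [/andP[c0 c1] S2]]] := S_props _ _ _ hS.
have mS1 := @vadd_mfun _ _ _ _ _ _ mX mZ.
have mS2 := @vadd_mfun _ _ _ _ _ _ mY mW.
have L1 : @linmap R n 1%:M = id.
  by apply/funext => x; rewrite /linmap trmx1 mulmx1.
have Lc : @linmap R n c%:M = @vscale R n c.
  by apply/funext => x; rewrite /linmap /vscale tr_scalar_mx mul_mx_scalar.
rewrite /DS /whiten (@cov_sum _ _ _ _ _ _ _ mX mZ cX cZ iXZ) (@cov_sum _ _ _ _ _ _ _ mY mW cY cW iYW).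
rewrite cX.2 cY.2 cZ.2 cW.2 S1 S2 L1 Lc.
pose mu := distribution P1 (@mkmfun _ _ _ _ _ mS1).
pose nu := distribution P2 (@mkmfun _ _ _ _ _ mS2).
have e : D (pushforward (law P1 (fun w => vadd (X w) (Z w))) (@vscale R n c))
           (pushforward (law P2 (fun w => vadd (Y w) (W w))) (@vscale R n c))
         = (`|c|%:E * D (law P1 (fun w => vadd (X w) (Z w)))
                        (law P2 (fun w => vadd (Y w) (W w))))%E :=
  hDideal.2 mu nu c.
rewrite e.
have h1 := hDideal.1 d1 O1 P1 X Z d2 O2 P2 Y W mX mZ mY mW iXZ iYW.
have g0 : (0 <= D (law P1 (fun w => vadd (X w) (Z w)))
                  (law P2 (fun w => vadd (Y w) (W w))))%E :=
  hDdiv.1 mu nu.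
apply: le_trans h1.
change (`|c|%:E * D (law P1 (fun w => vadd (X w) (Z w)))
                        (law P2 (fun w => vadd (Y w) (W w)))
  <= D (law P1 (fun w => vadd (X w) (Z w))) (law P2 (fun w => vadd (Y w) (W w))))%E.
apply: gee_pMl => //.
by rewrite lee_fin ger0_norm.
Qed.
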